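(* Let $p\in\{2,3\}$. Then for every integer $d\ge 1$, the directed graph $G_d$ is connected (as an undirected graph).
   Context: Fix a prime $p$ and an integer $d\ge1$. Let $\Omega_d$ be the set of partitions (unordered multisets) of $d+2$ into positive integers $e_1,e_2,\ldots$ with each $e_j\not\equiv 1\pmod p$. For $\vec E,\vec E'\in\Omega_d$ write $\vec E\prec\vec E'$ if $\vec E'$ is a refinement of $\vec E$ (i.e. $\vec E'$ is obtained by replacing each entry of $\vec E$ by a multiset of positive integers summing to it). $G_d$ is the directed graph with vertex set $\Omega_d$ and an edge from $\vec E$ to $\vec E'$ if and only if $\vec E\prec\vec E'$, $\vec E\neq\vec E'$, and there is no partition in $\Omega_d$ lying strictly between them. *)

(* Defs.v *)
From mathcomp Require Import all_boot.
From Stdlib Require Import Relations.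
Set Implicit Arguments. Unset Strict Implicit. Unset Printing Implicit Defensive.

(* A partition (unordered multiset of positive integers) is represented
   canonically as a non-increasing sequence of positive naturals. *)

Definition in_Omega (p d : nat) (E : seq nat) : bool :=
  [&& sorted geq E, all (fun e => 0 < e) E, sumn E == d + 2
    & all (fun e => e %% p != 1 %% p) E].

Definition refines (E E' : seq nat) : Prop :=
  exists ss : seq (seq nat), map sumn ss = E /\ perm_eq (flatten ss) E'.

Definition Gedge (p d : nat) (E E' : seq nat) : Prop :=
  [/\ in_Omega p d E, in_Omega p d E', refines E E', E <> E' &
    ~ (exists F, [/\ in_Omega p d F, refines E F, refines F E', F <> E & F <> E'])].

Definition Gconnected (p d : nat) : Prop :=
  forall E E', in_Omega p d E -> in_Omega p d E' ->
    clos_refl_trans (seq nat) (fun a b => Gedge p d a b \/ Gedge p d b a) E E'.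

(* Main.v *)
Require Import Defs.
From mathcomp Require Import all_boot.
From mathcomp Require Import zify.
From Stdlib Require Import Relations Classical.

Definition RR p d := clos_refl_trans (seq nat) (fun a b => Gedge p d a b \/ Gedge p d b a).

Lemma RR_sym p d a b : RR p d a b -> RR p d b a.
Proof.
elim=> [x y H|x|x y z _ H1 _ H2].
- by apply: rt_step; tauto.
- exact: rt_refl.
- exact: rt_trans H2 H1.
Qed.

Lemma geq_tr : @ssrbool.transitive nat geq.
Proof. move=> y x z /= H1 H2; lia. Qed.

Lemma geq_anti : @ssrbool.antisymmetric nat geq.
Proof. move=> x y /andP [H1 H2]; lia. Qed.

Lemma size_blocks (ss : seq (seq nat)) :
  all (fun s => 0 < sumn s) ss ->
  size ss <= sumn (shape ss) /\ (size ss = sumn (shape ss) -> flatten ss = map sumn ss).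
Proof.
elim: ss => [|s ss IH] //= /andP [Hs Hss].
have [IH1 IH2] := IH Hss.
have Hsz : 0 < size s by case: s Hs.
split; first lia.
move=> Heq.
have Hs1 : size s = 1 by lia.
have Hrest : size ss = sumn (shape ss) by lia.
rewrite (IH2 Hrest).
case: s Hs Hsz Hs1 {Heq} => [|x [|y s]] //= _ _ _.
by rewrite addn0.
Qed.

Lemma refines_size p d A B : in_Omega p d A -> in_Omega p d B -> refines A B ->
  size A <= size B /\ (size A = size B -> A = B).
Proof.
move=> /and4P [sA pA _ _] /and4P [sB _ _ _] [ss [Hm Hp]].
have Hall : all (fun s => 0 < sumn s) ss.
  by move: pA; rewrite -Hm all_map.
have [H1 H2] := @size_blocks ss Hall.
have Hsz : size B = sumn (shape ss) by rewrite -(perm_size Hp) size_flatten.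
have HszA : size A = size ss by rewrite -Hm size_map.
split; first lia.
move=> Heq.
have Hf := H2 ltac:(lia).
apply: (sorted_eq geq_tr geq_anti) => //.
by rewrite -Hm -Hf.
Qed.

Lemma cover_gen p d n : forall E E', size E' - size E < n ->
  in_Omega p d E -> in_Omega p d E' -> refines E E' -> RR p d E E'.
Proof.
elim: n => [|n IH] E E' Hn HE HE' Hr; first lia.
case: (classic (E = E')) => [->|Hne]; first exact: rt_refl.
case: (classic (exists F, [/\ in_Omega p d F, refines E F, refines F E', F <> E & F <> E'])).
- move=> [F [HF H1 H2 H3 H4]].
  have [s1 e1] := @refines_size p d E F HE HF H1.
  have [s2 e2] := @refines_size p d F E' HF HE' H2.
  have l1 : size E < size F.
    rewrite ltn_neqAle s1 andbT; apply/eqP => E1; exact: H3 (esym (e1 E1)).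
  have l2 : size F < size E'.
    rewrite ltn_neqAle s2 andbT; apply/eqP => E1; exact: H4 (e2 E1).
  apply: (rt_trans _ _ _ F).
  + apply: IH => //; lia.
  + apply: IH => //; lia.
- move=> Hno; apply: rt_step; left; by split.
Qed.

Lemma cover p d E E' : in_Omega p d E -> in_Omega p d E' -> refines E E' -> RR p d E E'.
Proof. apply: (@cover_gen p d (size E').+1); lia. Qed.

Lemma sorted_nseq x n : sorted geq (nseq n x).
Proof.
elim: n => //= n IH; rewrite (path_sortedE geq_tr) IH andbT.
by apply/allP => y /nseqP [-> _] /=.
Qed.

Lemma map_sumn_seq1 (s : seq nat) : map sumn [seq [:: x] | x <- s] = s.
Proof. by elim: s => //= x s ->; rewrite addn0. Qed.

Lemma nseq2_Omega d k : 2 * k = d + 2 -> in_Omega 2 d (nseq k 2).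
Proof.
move=> H; apply/and4P; split.
- exact: sorted_nseq.
- by rewrite all_nseq orbT.
- by rewrite sumn_nseq; apply/eqP; lia.
- by rewrite all_nseq orbT.
Qed.

Lemma hub2 d E : in_Omega 2 d E -> RR 2 d E (nseq ((d+2)%/2) 2).
Proof.
move=> HE; have /and4P [sE pE sumE modE] := HE.
set ss := map (fun e => nseq (e %/ 2) 2) E.
have Hm : map sumn ss = E.
  rewrite /ss -map_comp -[RHS]map_id; apply/eq_in_map => e He /=.
  rewrite sumn_nseq; have := allP modE e He => /= Hmod; lia.
have Hall : all (pred1 2) (flatten ss).
  apply/allP => x /flattenP [s /mapP [e _ ->] /nseqP [-> _]]; by [].
have Hsum : sumn (flatten ss) = d+2 by rewrite sumn_flatten Hm; apply/eqP.
have Hfl : flatten ss = nseq ((d+2)%/2) 2.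
  move/all_pred1P: Hall; set k := size _ => Hf.
  rewrite Hf sumn_nseq in Hsum; rewrite Hf; congr nseq; lia.
have Hk : 2 * ((d+2)%/2) = d + 2.
  by move: Hsum; rewrite Hfl sumn_nseq; lia.
apply: cover => //.
- exact: nseq2_Omega.
- by exists ss; rewrite Hm Hfl; split.
Qed.

Definition split3 e := if e %% 3 == 0 then nseq (e %/ 3) 3 else 2 :: nseq (e %/ 3) 3.
Definition fin a b := nseq b 3 ++ nseq a 2.

Lemma fin_sorted a b : sorted geq (fin a b).
Proof.
elim: b => [|b IH] /=; first exact: sorted_nseq.
rewrite (path_sortedE geq_tr) IH andbT /fin all_cat !all_nseq.
by rewrite !orbT.
Qed.

Lemma fin_Omega d a b : 2*a + 3*b = d+2 -> in_Omega 3 d (fin a b).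
Proof.
move=> H; apply/and4P; split.
- exact: fin_sorted.
- by rewrite /fin all_cat !all_nseq !orbT.
- by rewrite /fin sumn_cat !sumn_nseq; apply/eqP; lia.
- by rewrite /fin all_cat !all_nseq !orbT.
Qed.

Lemma count23 (P : pred nat) s : all (fun x => (x==2)||(x==3)) s ->
  count P s = P 2 * count_mem 2 s + P 3 * count_mem 3 s.
Proof.
elim: s => [|x s IH] /=; first by rewrite !muln0.
move=> /andP [/orP [/eqP->|/eqP->] H]; rewrite IH //=;
  case: (P 2); case: (P 3); lia.
Qed.

Lemma perm23 s : all (fun x => (x==2)||(x==3)) s ->
  perm_eq s (fin (count_mem 2 s) (count_mem 3 s)).
Proof.
move=> H; apply/permP => P; rewrite count23 // /fin count_cat !count_nseq; lia.
Qed.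

Lemma hub3 d E : in_Omega 3 d E -> exists a b, 2*a+3*b = d+2 /\ RR 3 d E (fin a b).
Proof.
move=> HE; have /and4P [sE pE sumE modE] := HE.
set ss := map split3 E.
have Hm : map sumn ss = E.
  rewrite /ss -map_comp -[RHS]map_id; apply/eq_in_map => e He /=.
  have := allP modE e He => /= Hmod.
  rewrite /split3; case: ifP => /= H0; rewrite sumn_nseq; lia.
have Hall : all (fun x => (x==2)||(x==3)) (flatten ss).
  apply/allP => x /flattenP [s /mapP [e _ ->]]; rewrite /split3; case: ifP => _.
  + by move/nseqP => [-> _].
  + by rewrite inE => /orP [/eqP->//|/nseqP [-> _]].
have Hp := @perm23 _ Hall.
have Hsum : 2 * count_mem 2 (flatten ss) + 3 * count_mem 3 (flatten ss) = d + 2.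
  have := perm_sumn Hp; rewrite sumn_flatten Hm (eqP sumE) /fin sumn_cat !sumn_nseq.
  lia.
exists (count_mem 2 (flatten ss)), (count_mem 3 (flatten ss)); split => //.
apply: cover => //.
- exact: fin_Omega.
- by exists ss; rewrite Hm; split.
Qed.

Lemma finR d n : forall b a, b <= n -> 2*a+3*b = d+2 ->
  RR 3 d (fin a b) (fin ((d+2 - 3*((d+2)%%2))%/2) ((d+2)%%2)).
Proof.
elim: n => [|n IH] b a Hb H.
- have Eb : (d+2)%%2 = b by lia.
  have Ea : (d+2 - 3*((d+2)%%2))%/2 = a by lia.
  rewrite Ea Eb; exact: rt_refl.
case: b Hb H => [|[|b']] Hb H.
- have Eb : (d+2)%%2 = 0 by lia.
  have Ea : (d+2 - 3*((d+2)%%2))%/2 = a by lia.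
  rewrite Ea Eb; exact: rt_refl.
- have Eb : (d+2)%%2 = 1 by lia.
  have Ea : (d+2 - 3*((d+2)%%2))%/2 = a by lia.
  rewrite Ea Eb; exact: rt_refl.
have HC : in_Omega 3 d (6 :: fin a b').
  apply/and4P; split.
  + rewrite /= (path_sortedE geq_tr) fin_sorted andbT /fin all_cat !all_nseq.
    by rewrite !orbT.
  + by rewrite /= /fin all_cat !all_nseq !orbT.
  + by rewrite /= /fin sumn_cat !sumn_nseq; apply/eqP; lia.
  + by rewrite /= /fin all_cat !all_nseq !orbT.
have H1 : refines (6 :: fin a b') (fin a b'.+2).
  exists ([:: 3; 3] :: map (fun x => [:: x]) (fin a b')); split.
  + by rewrite /= map_sumn_seq1.
  + by rewrite /= flatten_seq1; exact: perm_refl.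
have H2 : refines (6 :: fin a b') (fin (a+3) b').
  exists ([:: 2; 2; 2] :: map (fun x => [:: x]) (fin a b')); split.
  + by rewrite /= map_sumn_seq1.
  + rewrite /= flatten_seq1; apply/permP => P.
    rewrite /= /fin !count_cat !count_nseq; case: (P 2); case: (P 3); lia.
apply: (rt_trans _ _ _ (6 :: fin a b')).
- apply: RR_sym; apply: cover => //; exact: fin_Omega.
apply: (rt_trans _ _ _ (fin (a+3) b')).
- apply: cover => //; apply: fin_Omega; lia.
apply: IH; lia.
Qed.

Theorem proposition2p6 (p : nat) : (p = 2 \/ p = 3) ->
  forall d : nat, 1 <= d -> Gconnected p d.
Proof.
move=> [->|->] d _ E E' HE HE'; rewrite /Gconnected.
- rewrite /Gconnected; apply: (@rt_trans _ _ E (nseq ((d+2)%/2) 2) E' (@hub2 d E HE)); exact: RR_sym (@hub2 d E' HE').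
- have [a [b [Hab H]]] := @hub3 d E HE.
  have [a' [b' [Hab' H']]] := @hub3 d E' HE'.
  set T := fin ((d+2 - 3*((d+2)%%2))%/2) ((d+2)%%2).
  have R1 : RR 3 d E T := rt_trans _ _ _ _ _ H (@finR d b b a (leqnn b) Hab).
  have R2 : RR 3 d E' T := rt_trans _ _ _ _ _ H' (@finR d b' b' a' (leqnn b') Hab').
  exact (rt_trans _ _ _ _ _ R1 (@RR_sym 3 d _ _ R2)).
Qed.
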